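(* Let $\pi,\tau\in\mathfrak{S}_m$. If $\pi$ and $\tau$ are strongly c-Wilf equivalent, then $\mathcal{O}_\pi=\mathcal{O}_\tau$.
   Context: $\mathfrak{S}_n$ is the symmetric group on $[n]$. The standardization $\operatorname{st}(w)$ of a word of distinct integers replaces its smallest entry by 1, the next smallest by 2, etc. For $\pi\in\mathfrak{S}_m$ and $\sigma\in\mathfrak{S}_n$, $\operatorname{Em}(\pi,\sigma)=\{i\in[n-m+1]:\operatorname{st}(\sigma_i\cdots\sigma_{i+m-1})=\pi\}$. Let $a^\pi_{n,k}$ be the number of $\sigma\in\mathfrak{S}_n$ with $|\operatorname{Em}(\pi,\sigma)|=k$; $\pi$ and $\tau$ are strongly c-Wilf equivalent if $a^\pi_{n,k}=a^\tau_{n,k}$ for all $n,k$. The overlap set is $\mathcal{O}_\pi=\{i\in[m-1]:\operatorname{st}(\pi_{i+1}\cdots\pi_m)=\operatorname{st}(\pi_1\cdots\pi_{m-i})\}$. *)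

(* Defs.v *)
From mathcomp Require Import all_boot all_order all_fingroup.
Set Implicit Arguments. Unset Strict Implicit. Unset Printing Implicit Defensive.

(* Conventions: permutations of [n] are represented by 'S_n (permutations of
   'I_n = {0,..,n-1}); positions and values are shifted down by one (0-based).
   This shift does not affect standardization or equality of patterns. *)

Definition word {n : nat} (s : 'S_n) : seq nat := [seq val (s i) | i <- enum 'I_n].

(* For words with
   distinct entries this is the usual standardization, shifted by one. *)
Definition st (w : seq nat) : seq nat := [seq count (fun y => y < x) w | x <- w].

Definition factor (w : seq nat) (i m : nat) : seq nat := take m (drop i w).

Definition Em {m n : nat} (p : 'S_m) (s : 'S_n) : seq nat :=
  [seq i <- iota 0 (n - m + 1) | (m <= n) && (st (factor (word s) i m) == word p)].

Definition a_count {m : nat} (p : 'S_m) (n k : nat) : nat :=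
  #|[set s : 'S_n | size (Em p s) == k]|.

Definition strongly_cWilf_equiv {m : nat} (p t : 'S_m) : Prop :=
  forall n k : nat, a_count p n k = a_count t n k.

(* overlap set O_pi = {i in [m-1] : st(pi_{i+1}..pi_m) = st(pi_1..pi_{m-i})} *)
Definition overlap_set {m : nat} (p : 'S_m) : {set 'I_m} :=
  [set i : 'I_m | (0 < val i) &&
     (st (drop i (word p)) == st (take (m - i) (word p)))].

(* Main.v *)
Require Import Defs.
From mathcomp Require Import all_boot all_order all_fingroup.
From mathcomp Require Import zify.
Set Implicit Arguments. Unset Strict Implicit. Unset Printing Implicit Defensive.

Lemma size_word n (s : 'S_n) : size (word s) = n.
Proof. by rewrite /word size_map size_enum_ord. Qed.

Lemma nth_word n (s : 'S_n) (i : 'I_n) : nth 0 (word s) i = s i.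
Proof. by rewrite /word (nth_map i) ?size_enum_ord // nth_ord_enum. Qed.

Lemma word_uniq n (s : 'S_n) : uniq (word s).
Proof.
rewrite /word map_inj_uniq ?enum_uniq // => i j /val_inj; exact: perm_inj.
Qed.

Lemma word_inj n : injective (@word n).
Proof.
move=> s t E; apply/permP => i; apply/eqP; rewrite -val_eqE /=.
by rewrite -!nth_word E.
Qed.

Lemma count_lt_strict (s : seq nat) a b : a \in s -> a < b ->
  count (fun y => y < a) s < count (fun y => y < b) s.
Proof.
elim: s => //= x s IH; rewrite inE => /orP [/eqP -> | H] ab.
  rewrite ltnn add0n ab add1n ltnS; apply: sub_count => y /= ya; lia.
have := IH H ab; case xa: (x < a); case xb: (x < b) => //=; try lia.
Qed.

Lemma count_lt_mono (s : seq nat) a b : a \in s ->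
  (count (fun y => y < a) s < count (fun y => y < b) s) = (a < b).
Proof.
move=> As; case: (ltnP a b) => ab; first exact: count_lt_strict.
apply/negbTE; rewrite -leqNgt; apply: sub_count => y /= yb; lia.
Qed.

Lemma size_st w : size (st w) = size w.
Proof. by rewrite /st size_map. Qed.

Lemma nth_st w i : i < size w -> nth 0 (st w) i = count (fun y => y < nth 0 w i) w.
Proof. by move=> H; rewrite /st (nth_map 0). Qed.

Lemma st_map_mono (f : nat -> nat) w :
  {in w &, forall x y, (f x < f y) = (x < y)} -> st (map f w) = st w.
Proof.
move=> H; rewrite /st -map_comp; apply/eq_in_map => x xw /=.
rewrite count_map; apply: eq_in_count => y yw /=; exact: H.
Qed.

Definition rk (v : seq nat) x := count (fun y => y < x) v.

Lemma st_rk v w : {subset w <= v} -> st (map (rk v) w) = st w.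
Proof.
move=> S; apply: st_map_mono => x y xw yw; rewrite /rk count_lt_mono //; exact: S.
Qed.

Lemma stE v : st v = map (rk v) v.
Proof. by []. Qed.

Lemma st_take_st a v : st (take a (st v)) = st (take a v).
Proof. by rewrite (stE v) -map_take st_rk // => x; apply: mem_take. Qed.

Lemma st_drop_st a v : st (drop a (st v)) = st (drop a v).
Proof. by rewrite (stE v) -map_drop st_rk // => x; apply: mem_drop. Qed.

Lemma st_factor_st v j L : st (factor (st v) j L) = st (factor v j L).
Proof.
rewrite /factor (stE v) -map_drop -map_take st_rk // => x /mem_take; apply: mem_drop.
Qed.

Lemma st_st v : st (st v) = st v.
Proof. by have := @st_rk v v (fun x h => h); rewrite -stE. Qed.

Lemma count_lt_iota x k : count (fun y => y < x) (iota 0 k) = minn x k.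
Proof.
elim: k => [|k IH]; first by rewrite minn0.
rewrite -addn1 iotaD count_cat IH /= add0n addn0; lia.
Qed.

Lemma st_word n (s : 'S_n) : st (word s) = word s.
Proof.
have P : perm_eq (word s) (iota 0 n).
  apply: uniq_perm; [exact: word_uniq | exact: iota_uniq | move=> x].
  rewrite mem_iota add0n /= ; apply/idP/idP.
    by rewrite /word => /mapP [i _ ->] /=.
  move=> xn; apply/mapP; exists (s^-1 (Ordinal xn))%g; rewrite ?mem_enum //.
  by rewrite permKV.
apply: (@eq_from_nth _ 0); rewrite size_st // => i ilt.
have /seq.permP PC := P.
rewrite nth_st // PC count_lt_iota.
have : nth 0 (word s) i \in iota 0 n by rewrite -(perm_mem P) mem_nth.
rewrite mem_iota; lia.
Qed.


Lemma rk_lt (s : seq nat) x : x \in s -> rk s x < size s.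
Proof.
move=> xs; rewrite /rk -(count_predC (fun y => y < x) s).
have : 0 < count (predC (fun y => y < x)) s.
  by rewrite -has_count; apply/hasP; exists x => //=; rewrite ltnn.
lia.
Qed.

Lemma perm_of_keys N (key : nat -> nat) : {in gtn N &, injective key} ->
  exists u : 'S_N, word u = st (mkseq key N).
Proof.
move=> Kinj.
set s := mkseq key N.
have H (i : 'I_N) : rk s (key i) < N.
  rewrite -{2}(size_mkseq key N); apply: rk_lt; apply/mapP; exists (val i) => //.
  by rewrite mem_iota /=.
pose f := fun i : 'I_N => Ordinal (H i).
have finj : injective f.
  move=> i j /(congr1 val) /= E; apply: val_inj; apply: Kinj; rewrite ?inE //=.
  have Ms (k : 'I_N) : key k \in s by apply/mapP; exists (val k); rewrite ?mem_iota /=.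
  case: (ltngtP (key i) (key j)) => // C.
    by have := count_lt_strict (Ms i) C; rewrite /rk in E; rewrite E ltnn.
  by have := count_lt_strict (Ms j) C; rewrite /rk in E; rewrite E ltnn.
exists (perm finj).
rewrite /word stE /s /mkseq -val_enum_ord -!map_comp; apply/eq_map => i /=.
rewrite permE /=; congr rk; rewrite /s /mkseq -val_enum_ord -map_comp enumT; exact: eq_map.
Qed.

Lemma st_perm_exists L (v : seq nat) : size v = L -> uniq v ->
  exists u : 'S_L, word u = st v.
Proof.
move=> sv uv.
have [u Hu] : exists u : 'S_L, word u = st (mkseq (nth 0 v) L).
  apply: perm_of_keys => i j; rewrite !inE /= => iL jL /eqP.
  by rewrite nth_uniq ?sv // => /eqP.
by exists u; rewrite Hu -sv mkseq_nth.
Qed.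

Lemma count_iota_nth (a : seq nat) x :
  count (fun y => y < x) a = count (fun k => nth 0 a k < x) (iota 0 (size a)).
Proof. by rewrite -{1}(mkseq_nth 0 a) /mkseq count_map. Qed.

Lemma st_idx a b : size a = size b ->
  (forall i j, i < size a -> j < size a -> (nth 0 a i < nth 0 a j) = (nth 0 b i < nth 0 b j)) ->
  st a = st b.
Proof.
move=> sab H; apply: (@eq_from_nth _ 0); rewrite ?size_st // => i ia.
rewrite !nth_st -?sab // !count_iota_nth -sab.
apply: eq_in_count => k; rewrite mem_iota /= => kl; exact: H.
Qed.

Lemma st_idx_inv a b i j : st a = st b -> i < size a -> j < size a ->
  (nth 0 a i < nth 0 a j) = (nth 0 b i < nth 0 b j).
Proof.
move=> E ia ja.
have sab : size a = size b by rewrite -size_st E size_st.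
have ib : i < size b by rewrite -sab.
rewrite -(@count_lt_mono a _ (nth 0 a j) (mem_nth 0 ia)).
rewrite -(@count_lt_mono b _ (nth 0 b j) (mem_nth 0 ib)).
by rewrite -!nth_st -?sab // E.
Qed.


Lemma nth_word' n (s : 'S_n) i (h : i < n) : nth 0 (word s) i = s (Ordinal h).
Proof. by rewrite -nth_word. Qed.

Lemma word_perm_iota n (s : 'S_n) : perm_eq (word s) (iota 0 n).
Proof.
apply: uniq_perm; [exact: word_uniq | exact: iota_uniq | move=> x].
rewrite mem_iota add0n /= ; apply/idP/idP.
  by rewrite /word => /mapP [i _ ->] /=.
move=> xn; apply/mapP; exists (s^-1 (Ordinal xn))%g; rewrite ?mem_enum //.
by rewrite permKV.
Qed.

Lemma size_factor w j L : j + L <= size w -> size (factor w j L) = L.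
Proof. move=> h; rewrite /factor size_takel // size_drop; lia. Qed.

Lemma nth_factor w j L k : k < L -> nth 0 (factor w j L) k = nth 0 w (j + k).
Proof. by move=> h; rewrite /factor nth_take // nth_drop. Qed.

Definition fib n j L (u : 'S_L) : {set 'S_n} :=
  [set s : 'S_n | st (factor (word s) j L) == word u].
Arguments fib : clear implicits.

Lemma fib_le n j L (u v : 'S_L) : j + L <= n -> #|fib n j L u| <= #|fib n j L v|.
Proof.
move=> jLn.
pose rho := (v * u^-1)%g.
pose rn k := nth 0 (word rho) k.
have rnlt k : k < L -> rn k < L.
  move=> kL; rewrite /rn nth_word' //.
pose R i := if (j <= i) && (i < j + L) then j + rn (i - j) else i.
have Rlt (i : 'I_n) : R i < n.
  rewrite /R; case: ifP => [/andP [h1 h2] | _]; last exact: ltn_ord.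
  have := rnlt (i - j); lia.
pose rf (i : 'I_n) : 'I_n := Ordinal (Rlt i).
have rinj : injective rf.
  move=> i1 i2 /(congr1 val) /=; rewrite /R.
  have uw := word_uniq rho.
  have szr := size_word rho.
  case: ifP => [/andP [a1 b1] | /negbT h1]; case: ifP => [/andP [a2 b2] | /negbT h2].
  - move=> /eqP; rewrite eqn_add2l /rn nth_uniq ?szr //; try lia.
    move=> /eqP E; apply: val_inj => /=; lia.
  - have := rnlt (i1 - j); lia.
  - have := rnlt (i2 - j); lia.
  - by move=> E; apply: val_inj.
pose r := perm rinj.
have rval k (h : j + k < n) (kL : k < L) : val (r (Ordinal h)) = j + rn k.
  rewrite permE /= /R; case: ifP; last lia.
  by move=> _; congr (j + rn _); lia.
pose phi := fun s : 'S_n => (r * s)%g.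
have phi_inj : injective phi := mulgI r.
rewrite -(card_imset _ phi_inj); apply: subset_leq_card.
apply/subsetP => x /imsetP [s]; rewrite !inE => /eqP Hs ->.
set a := factor (word s) j L.
have sa : size a = L by rewrite size_factor // size_word.
have E1 : factor (word (phi s)) j L = map (nth 0 a) (word rho).
  apply: (@eq_from_nth _ 0); first by rewrite size_map size_word size_factor ?size_word.
  move=> k; rewrite size_factor ?size_word // => kL.
  have h : j + k < n by lia.
  rewrite nth_factor // (nth_map 0) ?size_word // -/(rn k).
  rewrite nth_word' /phi permM.
  have h' : j + rn k < n by have := rnlt k kL; lia.
  have -> : r (Ordinal h) = Ordinal h' by apply: val_inj; rewrite rval.
  by rewrite -nth_word' /a nth_factor // rnlt.
rewrite E1; apply/eqP; apply: (@eq_from_nth _ 0); rewrite size_st size_map !size_word //.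
move=> k kL.
have Pa : perm_eq (map (nth 0 a) (word rho)) a.
  rewrite -{2}(mkseq_nth 0 a) sa /mkseq; apply: perm_map; exact: word_perm_iota.
have PC P : count P (map (nth 0 a) (word rho)) = count P a.
  by move: Pa => /seq.permP PC'; exact: PC' P.
rewrite nth_st; last by rewrite size_map size_word.
rewrite PC (nth_map 0) ?size_word // -/(rn k).
rewrite -nth_st ?sa ?rnlt // /a Hs /rn.
rewrite (nth_word' rho kL) nth_word (nth_word' v kL) permM permKV //.
Qed.


Lemma factor_factor (w : seq nat) j L a b : a + b <= L ->
  factor (factor w j L) a b = factor w (j + a) b.
Proof.
move=> h; rewrite /factor take_drop take_takel; last lia.
by rewrite -take_drop drop_drop addnC.
Qed.

Lemma factor_uniq (w : seq nat) j L : uniq w -> uniq (factor w j L).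
Proof. by move=> u; rewrite /factor take_uniq // drop_uniq. Qed.

Lemma card_setsum (T : finType) (P : pred T) : #|[set x | P x]| = \sum_(x : T) (P x : nat).
Proof.
rewrite -sum1_card big_mkcond /=; apply: eq_bigr => x _; rewrite inE; by case: (P x).
Qed.

Definition Fc n j L := #|fib n j L 1|.

Lemma fib_eq n j L (u : 'S_L) : j + L <= n -> #|fib n j L u| = Fc n j L.
Proof. by move=> h; apply/eqP; rewrite eqn_leq !fib_le. Qed.

Lemma Fc_pos n j L : j + L <= n -> 0 < Fc n j L.
Proof.
move=> h.
have sz : size (factor (word (1 : 'S_n)) j L) = L by rewrite size_factor // size_word.
have [u Hu] := st_perm_exists sz (factor_uniq j L (word_uniq (1 : 'S_n))).
rewrite -(fib_eq u h) card_gt0; apply/set0Pn; exists 1%g; by rewrite inE Hu.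
Qed.

Definition occ m (p : 'S_m) (w : seq nat) j := st (factor w j m) == word p.

Definition Gc m (p : 'S_m) n j j' :=
  #|[set s : 'S_n | occ p (word s) j && occ p (word s) j']|.

Definition Cc m (p : 'S_m) e :=
  #|[set u : 'S_(m + e) | occ p (word u) 0 && occ p (word u) e]|.

Lemma occ_st m (p : 'S_m) x a : occ p (st x) a = occ p x a.
Proof. by rewrite /occ st_factor_st. Qed.

Lemma Gc_sym m (p : 'S_m) n j j' : Gc p n j j' = Gc p n j' j.
Proof. by rewrite /Gc; apply: eq_card => s; rewrite !inE andbC. Qed.

Lemma G_formula m (p : 'S_m) n j e : j + (m + e) <= n ->
  Gc p n j (j + e) = Cc p e * Fc n j (m + e).
Proof.
move=> h.
pose Q (u : 'S_(m + e)) := occ p (word u) 0 && occ p (word u) e.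
have step (s : 'S_n) : (occ p (word s) j && occ p (word s) (j + e) : nat) =
    \sum_(u : 'S_(m + e)) Q u * (s \in fib n j (m + e) u).
  set x := factor (word s) j (m + e).
  have sz : size x = m + e by rewrite size_factor // size_word.
  have [u0 Hu0] := st_perm_exists sz (factor_uniq j (m + e) (word_uniq s)).
  have E1 : occ p (word s) j = occ p (word u0) 0.
    by rewrite Hu0 occ_st /occ /x factor_factor ?addn0 //; lia.
  have E2 : occ p (word s) (j + e) = occ p (word u0) e.
    by rewrite Hu0 occ_st /occ /x factor_factor //; lia.
  rewrite E1 E2 (bigD1 u0) //= inE -/x -Hu0 eqxx muln1 big1 ?addn0 // => u neq.
  rewrite inE -/x -Hu0; case: eqP => [/word_inj E|]; last by rewrite muln0.
  by rewrite E eqxx in neq.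
rewrite /Gc card_setsum (eq_bigr _ (fun s _ => step s)) exchange_big /=.
rewrite /Cc card_setsum big_distrl /=; apply: eq_bigr => u _.
rewrite -big_distrr /=; congr (_ * _); rewrite -(fib_eq u h) -sum1_card [RHS]big_mkcond /=; apply: eq_bigr => i _; by case: (i \in _).
Qed.


Lemma count_iota_sum (a : pred nat) k : count a (iota 0 k) = \sum_(j < k) a j.
Proof.
rewrite -sum1_count -(big_mkord xpredT (fun j => (a j : nat))) big_mkcond /=.
rewrite /index_iota subn0; apply: eq_bigr => i _; by case: (a i).
Qed.

Lemma size_Em m (p : 'S_m) e (s : 'S_(m + e)) :
  size (Em p s) = \sum_(j < e.+1) occ p (word s) j.
Proof.
rewrite /Em size_filter addKn addn1 count_iota_sum.
by apply: eq_bigr => j _; rewrite leq_addr.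
Qed.

Lemma sum_sq m (p : 'S_m) e :
  \sum_(s : 'S_(m + e)) (size (Em p s)) ^ 2 =
  \sum_(j < e.+1) \sum_(j' < e.+1) Gc p (m + e) j j'.
Proof.
under eq_bigr => s _ do rewrite size_Em expnS expn1 big_distrlr /=.
rewrite exchange_big /=; apply: eq_bigr => j _.
rewrite exchange_big /=; apply: eq_bigr => j' _.
rewrite /Gc card_setsum; apply: eq_bigr => s _; by rewrite mulnb.
Qed.

Lemma sum_dist m (p : 'S_m) n (f : nat -> nat) :
  \sum_(s : 'S_n) f (size (Em p s)) = \sum_(k < n.+2) f k * a_count p n k.
Proof.
have step (s : 'S_n) : f (size (Em p s)) = \sum_(k < n.+2) f k * (size (Em p s) == k).
  have lt : size (Em p s) < n.+2.
    rewrite /Em size_filter; apply: (leq_ltn_trans (count_size _ _)).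
    rewrite size_iota; lia.
  rewrite (bigD1 (Ordinal lt)) //= eqxx muln1 big1 ?addn0 // => k /eqP neq.
  case: eqP => [E|]; last by rewrite muln0.
  by exfalso; apply: neq; apply: val_inj; rewrite /= E.
rewrite (eq_bigr _ (fun s _ => step s)) exchange_big /=; apply: eq_bigr => k _.
by rewrite -big_distrr /= /a_count card_setsum.
Qed.


Lemma Gd m (p : 'S_m) e j j' : j <= e -> j' <= e ->
  Gc p (m + e) j j' = if j <= j' then Cc p (j' - j) * Fc (m + e) j (m + (j' - j))
                      else Cc p (j - j') * Fc (m + e) j' (m + (j - j')).
Proof.
move=> je j'e; case: leqP => h.
  rewrite {1}(_ : j' = j + (j' - j)); last lia.
  apply: G_formula; lia.
rewrite Gc_sym {1}(_ : j = j' + (j - j')); last lia.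
apply: G_formula; lia.
Qed.

Lemma S_eq m (p t : 'S_m) e : strongly_cWilf_equiv p t ->
  \sum_(j < e.+1) \sum_(j' < e.+1) Gc p (m + e) j j' =
  \sum_(j < e.+1) \sum_(j' < e.+1) Gc t (m + e) j j'.
Proof.
move=> H; rewrite -!sum_sq !(sum_dist _ _ (fun k => k ^ 2)).
by apply: eq_bigr => k _; rewrite H.
Qed.

Lemma no_lt m (p t : 'S_m) e : strongly_cWilf_equiv p t ->
  (forall e', e' < e -> Cc p e' = Cc t e') -> Cc p e < Cc t e -> False.
Proof.
move=> H IH lt.
have le (j j' : 'I_e.+1) : Gc p (m + e) j j' <= Gc t (m + e) j j'.
  have je : j <= e by rewrite -ltnS.
  have j'e : j' <= e by rewrite -ltnS.
  rewrite !Gd //; case: (leqP j j') => h; rewrite leq_mul2r.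
    case: (ltnP (j' - j) e) => d; first by rewrite IH ?leqnn ?orbT.
    have -> : j' - j = e by lia.
    by rewrite ltnW ?orbT.
  case: (ltnP (j - j') e) => d; first by rewrite IH ?leqnn ?orbT.
  have -> : j - j' = e by lia.
  by rewrite ltnW ?orbT.
have strict : Gc p (m + e) (@ord0 e) (@ord_max e) < Gc t (m + e) (@ord0 e) (@ord_max e).
  rewrite !Gd //= subn0 ltn_pmul2r //; apply: Fc_pos; lia.
have := S_eq e H.
rewrite (bigD1 ord0) //= [in RHS](bigD1 ord0) //=.
rewrite (bigD1 ord_max) //= [in RHS](bigD1 (@ord_max e)) //=.
have l1 : \sum_(i < e.+1 | i != ord_max) Gc p (m + e) 0 i <=
          \sum_(i < e.+1 | i != ord_max) Gc t (m + e) 0 i.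
  by apply: leq_sum => i _; exact: (le ord0 i).
have l2 : \sum_(i < e.+1 | i != ord0) \sum_(j' < e.+1) Gc p (m + e) i j' <=
          \sum_(i < e.+1 | i != ord0) \sum_(j' < e.+1) Gc t (m + e) i j'.
  by apply: leq_sum => i _; apply: leq_sum => j' _; exact: le.
move=> E; have := leq_add (leq_add strict l1) l2; by rewrite !addSn E ltnn.
Qed.

Lemma C_eq m (p t : 'S_m) : strongly_cWilf_equiv p t -> forall e, Cc p e = Cc t e.
Proof.
move=> H e; elim/ltn_ind: e => e IH.
have H' : strongly_cWilf_equiv t p by move=> n k; rewrite H.
case: (ltngtP (Cc p e) (Cc t e)) => // C.
  by exfalso; exact: (no_lt H IH C).
by exfalso; apply: (no_lt H' _ C) => e' /IH ->.
Qed.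


Lemma overlap_of_C m (p : 'S_m) d : d <= m -> 0 < Cc p d ->
  st (drop d (word p)) = st (take (m - d) (word p)).
Proof.
move=> dm; rewrite card_gt0 => /set0Pn [u]; rewrite inE => /andP [/eqP H0 /eqP Hd].
rewrite -{1}H0 -Hd st_drop_st st_take_st /factor drop0 take_takel ?leq_subr //.
by rewrite take_drop subnK.
Qed.

Lemma C_of_overlap m (p : 'S_m) d : 0 < d < m ->
  st (drop d (word p)) = st (take (m - d) (word p)) -> 0 < Cc p d.
Proof.
move=> /andP [d0 dm] O.
set wp := word p.
pose pi k := nth 0 wp k.
have szp : size wp = m by rewrite /wp size_word.
have pil k : k < m -> pi k < m by move=> km; rewrite /pi /wp nth_word' ltn_ord.
have piinj a b : a < m -> b < m -> (pi a == pi b) = (a == b).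
  by move=> am bm; rewrite /pi nth_uniq ?szp // /wp word_uniq.
have cons o o' : d <= o < m -> d <= o' < m -> (pi o < pi o') = (pi (o - d) < pi (o' - d)).
  move=> /andP [h1 h2] /andP [h3 h4].
  have szd : size (drop d wp) = m - d by rewrite size_drop szp.
  have i1 : o - d < size (drop d wp) by rewrite szd; lia.
  have i2 : o' - d < size (drop d wp) by rewrite szd; lia.
  have E := st_idx_inv O i1 i2.
  rewrite /pi -[o in LHS](subnKC h1) -[o' in LHS](subnKC h3) -!nth_drop E.
  rewrite !nth_take //; lia.
pose M := m.+1.
pose lo q := \max_(o : 'I_m | (d <= o) && (pi (o - d) < pi (q - d))) (pi o).+1.
pose key q := if q < m then M * (pi q).+1 else M * lo q + (pi (q - d)).+1.
have lo_ge o q : d <= o < m -> pi (o - d) < pi (q - d) -> (pi o).+1 <= lo q.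
  move=> /andP [h1 h2] h3.
  apply: (@leq_bigmax_cond _ (fun o : 'I_m => (d <= o) && (pi (o - d) < pi (q - d)))
             (fun o : 'I_m => (pi o).+1) (Ordinal h2)); by rewrite /= h1 h3.
have lo_le q X : (forall o, d <= o < m -> pi (o - d) < pi (q - d) -> (pi o).+1 <= X) ->
    lo q <= X.
  move=> H; apply/bigmax_leqP => o /andP [h1 h2]; apply: H h2; by rewrite h1 ltn_ord.
have Bord x y : d <= x < m + d -> d <= y < m + d -> pi (x - d) < pi (y - d) ->
    key x < key y.
  move=> /andP [h1 h2] /andP [h3 h4] lt.
  have bl : pi (x - d) < m by apply: pil; lia.
  have bl' : pi (y - d) < m by apply: pil; lia.
  rewrite /key; case: (ltnP x m) => qm; case: (ltnP y m) => ym.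
  - rewrite ltn_pmul2l // ltnS cons ?lt //; apply/andP; split => //.
  - have := lo_ge x y; rewrite h1 qm => /(_ isT lt).
    rewrite -(leq_pmul2l (isT : 0 < M)) => L1; lia.
  - have L : lo x <= pi y.
      apply: lo_le => o /andP [o1 o2] lto.
      have : pi o < pi y by rewrite cons ?o1 ?h3 //; lia.
      done.
    move: L; rewrite -(leq_pmul2l (isT : 0 < M)) mulnS => L; rewrite /M in L *; lia.
  - have L : lo x <= lo y.
      apply: lo_le => o /andP [o1 o2] lto; apply: lo_ge; first by rewrite o1.
      exact: ltn_trans lto lt.
    move: L; rewrite -(leq_pmul2l (isT : 0 < M)) => L; lia.
have keyA a b : a < m -> b < m -> (key a < key b) = (pi a < pi b).
  by move=> am bm; rewrite /key am bm ltn_pmul2l.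
have keyB a b : a < m -> b < m -> (key (d + a) < key (d + b)) = (pi a < pi b).
  move=> am bm; case: (ltngtP (pi a) (pi b)) => c.
  - by apply: Bord; rewrite ?addKn //; lia.
  - apply/negbTE; rewrite -leqNgt ltnW //; apply: Bord; rewrite ?addKn //; lia.
  - have : pi a == pi b by rewrite c.
    by rewrite piinj // => /eqP ->; rewrite ltnn.
have contra M' x y c : 0 < c < M' -> M' * x = M' * y + c -> False.
  move=> /andP [c0 cM] E; case: (leqP x y) => h.
    have : M' * x <= M' * y by rewrite leq_mul2l h orbT.
    lia.
  have : M' * y.+1 <= M' * x by rewrite leq_mul2l h orbT.
  rewrite mulnS; lia.
have kinj : {in gtn (m + d) &, injective key}.
  move=> q q'; rewrite !inE /= => hq hq' E.
  case: (boolP ((q < m) && (q' < m))) => [/andP [qm q'm] | nA].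
    apply/eqP; rewrite -piinj //; apply/eqP.
    case: (ltngtP (pi q) (pi q')) => // c.
      by have := keyA q q' qm q'm; rewrite E ltnn c.
    by have := keyA q' q q'm qm; rewrite E ltnn c.
  case: (boolP ((d <= q) && (d <= q'))) => [/andP [dq dq'] | nB].
    have h1 : q - d < m by lia.
    have h2 : q' - d < m by lia.
    case: (ltngtP (pi (q - d)) (pi (q' - d))) => c.
    - have := Bord q q'; rewrite dq dq' hq hq' => /(_ isT isT c); by rewrite E ltnn.
    - have := Bord q' q; rewrite dq dq' hq hq' => /(_ isT isT c); by rewrite E ltnn.
    - have : pi (q - d) == pi (q' - d) by rewrite c.
      rewrite piinj // => /eqP; lia.
  have [[q1 q2] | [q1 q2]] : (q < d /\ m <= q') \/ (q' < d /\ m <= q) by lia.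
  - move: E; rewrite /key (_ : q < m = true); last lia.
    rewrite (_ : q' < m = false); last lia.
    move=> E.
    have bl : pi (q' - d) < m by apply: pil; lia.
    exfalso; apply: (contra M _ _ (pi (q' - d)).+1 _ E); rewrite /M; lia.
  - move: E; rewrite /key (_ : q' < m = true); last lia.
    rewrite (_ : q < m = false); last lia.
    move=> E.
    have bl : pi (q - d) < m by apply: pil; lia.
    exfalso; apply: (contra M _ _ (pi (q - d)).+1 _ (esym E)); rewrite /M; lia.
have [u Hu] := perm_of_keys kinj.
have szK : size (mkseq key (m + d)) = m + d by rewrite size_mkseq.
rewrite /Cc card_gt0; apply/set0Pn; exists u; rewrite inE /occ Hu !st_factor_st.
apply/andP; split; apply/eqP; rewrite -(st_word p); apply: st_idx.
- by rewrite size_factor ?szK ?size_word //; lia.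
- move=> i j; rewrite size_factor ?szK; last lia.
  move=> im jm; rewrite !nth_factor // !add0n !nth_mkseq; try lia.
  exact: keyA.
- by rewrite size_factor ?szK ?size_word //; lia.
- move=> i j; rewrite size_factor ?szK; last lia.
  move=> im jm; rewrite !nth_factor // !nth_mkseq; try lia.
  exact: keyB.
Qed.

Lemma overlap_iff m (p : 'S_m) d : 0 < d < m ->
  (st (drop d (word p)) == st (take (m - d) (word p))) = (0 < Cc p d).
Proof.
move=> h; apply/eqP/idP; first exact: C_of_overlap.
by apply: overlap_of_C; case/andP: h => _ /ltnW.
Qed.


Theorem corollary2p3 (m : nat) (p t : 'S_m) :
  strongly_cWilf_equiv p t -> overlap_set p = overlap_set t.
Proof.
move=> H; apply/setP => i; rewrite !inE; case: (boolP (0 < val i)) => //= i0.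
by rewrite !overlap_iff ?i0 ?ltn_ord // (C_eq H).
Qed.
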